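(* Let $\mathfrak g$ be a semisimple Lie algebra of $r\times r$ matrices, identified with its dual via the trace form, let $N\ge 1$, let $a_1,\dots,a_N$ be pairwise distinct complex numbers and let $\sigma\in\mathfrak g$ be a fixed constant matrix. On $\mathfrak g^N\ni(A_1,\dots,A_N)$ introduce the new coordinates $B_0,\dots,B_{N-1}$ by $$B_l=(-1)^{N-l-1}\sum_{i=1}^N s_{N-l-1}(a_1,\dots,\widehat{a_i},\dots,a_N)\,A_i+(-1)^{N-l}s_{N-l}(a_1,\dots,a_N)\,\sigma,\qquad l=0,\dots,N-1,$$ (so that $\lambda^N\sigma+\sum_{i=0}^{N-1}B_i\lambda^i=\prod_{i=1}^N(\lambda-a_i)\cdot\big(\sigma+\sum_{i=1}^N\frac{A_i}{\lambda-a_i}\big)$), and set $B_N=\sigma$, $B_k=0$ for $k<0$ or $k>N$. For $l=0,\dots,N$ let $\Pi_l$ be the Poisson tensor given in these coordinates by the $N\times N$ block-diagonal operator matrix $\Pi_l=\begin{pmatrix}C_l&0\\0&D_l\end{pmatrix}$ with $(C_l)_{ij}=-[B_{i+j-l-1},\cdot\,]$ for $i,j=1,\dots,l$ and $(D_l)_{ij}=[B_{i+j+l-1},\cdot\,]$ for $i,j=1,\dots,N-l$, where rows and columns are indexed in order by $B_0,\dots,B_{N-1}$. Then the diagonal Lie–Poisson tensor $P$ on $\mathfrak g^N$ is, in the coordinates $B_0,\dots,B_{N-1}$, given by $$P=\sum_{l=0}^N(-1)^{N-l-1}s_{N-l}(a_1,\dots,a_N)\,\Pi_l .$$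
   Context: $s_k(x_1,\dots,x_m)$ denotes the $k$-th elementary symmetric polynomial ($s_0=1$, $s_k=0$ for $k<0$ or $k>m$), and a hat denotes omission. For a smooth function $F$ on $\mathfrak g^N$, $\partial F/\partial A_i\in\mathfrak g$ is defined by $F(\dots,A_i+t\Xi,\dots)=F+t\,\mathrm{Tr}(\frac{\partial F}{\partial A_i}\Xi)+o(t)$ for all $\Xi\in\mathfrak g$ (similarly for $\partial F/\partial B_j$). A tensor $T$ represented by an operator matrix $(T_{ij})$ acts by $(T\,dF)_i=\sum_j T_{ij}(\partial F/\partial X_j)$ and defines the bracket $\{F,G\}_T=\sum_i\mathrm{Tr}\big(\frac{\partial F}{\partial X_i}(T\,dG)_i\big)$, where $X_j$ are the coordinates in use. The diagonal Lie–Poisson tensor $P$ is given in the coordinates $A_1,\dots,A_N$ by $(P\,dF)_i=[A_i,\partial F/\partial A_i]$, $i=1,\dots,N$ (diagonal operator matrix with entries $[A_i,\cdot\,]$). *)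

(* Defs.v *)
From HB Require Import structures.
From mathcomp Require Import all_boot all_order all_algebra.
From mathcomp Require Import reals.
From mathcomp Require Import complex.
Set Implicit Arguments. Unset Strict Implicit. Unset Printing Implicit Defensive.
Import Order.TTheory GRing.Theory Num.Theory.
Local Open Scope ring_scope.

Section Defs.
Variable (C : fieldType) (r : nat).
Local Notation mat := 'M[C]_r.

Definition lbr (X Y : mat) : mat := X *m Y - Y *m X.

Definition lie_subalgebra (g : {vspace mat}) :=
  forall X Y, X \in g -> Y \in g -> lbr X Y \in g.

Definition lie_ideal (g I : {vspace mat}) :=
  (I <= g)%VS /\ forall X Y, X \in g -> Y \in I -> lbr X Y \in I.

(* derived algebra [I, I] : span of all brackets (spanned by brackets of basis vectors) *)
Definition derived (I : {vspace mat}) : {vspace mat} :=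
  <<[seq lbr X Y | X <- vbasis I, Y <- vbasis I]>>%VS.

Definition lie_solvable (I : {vspace mat}) := exists k, iter k derived I = 0%VS.

Definition semisimple (g : {vspace mat}) :=
  lie_subalgebra g /\ forall I, lie_ideal g I -> lie_solvable I -> I = 0%VS.

Definition elsym (s : seq C) (k : nat) : C :=
  \sum_(S : {set 'I_(size s)} | #|S| == k) \prod_(i in S) s`_i.

Variable (N : nat) (a : 'I_N -> C) (sigma : mat).

Definition a_all : seq C := [seq a j | j <- enum 'I_N].
Definition a_hat (i : 'I_N) : seq C := [seq a j | j <- enum 'I_N & j != i].

Definition Mcoef (l : nat) (i : 'I_N) : C :=
  (-1) ^+ (N - l - 1) * elsym (a_hat i) (N - l - 1).

(* new coordinates B_l, l = 0..N-1 (l, N-l-1 >= 0 in this range) *)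
Definition Bcoord (A : 'I_N -> mat) (l : nat) : mat :=
  \sum_(i < N) Mcoef l i *: A i + ((-1) ^+ (N - l) * elsym a_all (N - l)) *: sigma.

Definition Bext (A : 'I_N -> mat) (k : int) : mat :=
  match k with
  | Posz n => if (n < N)%N then Bcoord A n else if n == N then sigma else 0
  | Negz _ => 0
  end.

(* Entry (p,q) (0-based: p,q index B_0..B_{N-1}) of Pi_l applied to X.
   Paper's 1-based block indices: C_l block for p,q < l with i = p+1, j = q+1;
   D_l block for p,q >= l with i = p-l+1, j = q-l+1. *)
Definition Pi_entry (A : 'I_N -> mat) (l : nat) (p q : 'I_N) (X : mat) : mat :=
  if ((p < l) && (q < l))%N then
    - lbr (Bext A ((p.+1)%:Z + (q.+1)%:Z - l%:Z - 1)) X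
  else if ((l <= p) && (l <= q))%N then
    lbr (Bext A ((p - l).+1%:Z + (q - l).+1%:Z + l%:Z - 1)) X
  else 0.

(* bracket {F,G}_{Pi_l} at the point A, for B-coordinate differentials xi = dF, eta = dG *)
Definition Pi_bracket (A : 'I_N -> mat) (l : nat) (xi eta : 'I_N -> mat) : C :=
  \sum_(p < N) \tr (xi p *m \sum_(q < N) Pi_entry A l p q (eta q)).

(* chain rule: dF/dA_i = sum_l Mcoef l i * dF/dB_l *)
Definition dA (xi : 'I_N -> mat) (i : 'I_N) : mat :=
  \sum_(l < N) Mcoef l i *: xi l.

Definition P_bracket (A : 'I_N -> mat) (xi eta : 'I_N -> mat) : C :=
  \sum_(i < N) \tr (dA xi i *m lbr (A i) (dA eta i)).

End Defs.

(* Main.v *)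
Require Import Defs.
From HB Require Import structures.
From mathcomp Require Import all_boot all_order all_algebra.
From mathcomp Require Import reals.
From mathcomp Require Import complex.
From mathcomp Require Import zify ring lra.
Import Order.TTheory GRing.Theory Num.Theory.
Local Open Scope ring_scope.
Set Implicit Arguments.
Section W.
Variable C : numFieldType.
Implicit Types F H G : {poly C}.

Definition eps (p q k : nat) : C :=
  if ((k <= p) && (k <= q))%N then 1 else if ((p < k) && (q < k))%N then -1 else 0.

Definition W (p q : nat) F H : C :=
  \sum_(k < (p + q).+2) F`_k * H`_((p + q).+1 - k) * eps p q k.

Ltac solve_eps := rewrite /eps; repeat (case: ifP => ?); 
  repeat (case: eqP => ?); try (exfalso; lia); simpl; ring.

Lemma eps_rev p q k : (k <= (p + q).+1)%N -> eps p q ((p + q).+1 - k) = - eps p q k.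
Proof. move=> hk; solve_eps. Qed.

Lemma W_anti p q F H : W p q F H = - W p q H F.
Proof.
rewrite /W (reindex_inj rev_ord_inj) /= -sumrN; apply: eq_bigr => k _.
have hk : (k <= (p + q).+1)%N by have := ltn_ord k; lia.
rewrite eps_rev ?leq_subr // subKn //. 
rewrite mulrN; ring.
Qed.

Lemma eps_step p q j : eps p q j.+1 - eps p q j = - ((j == p)%:R + (j == q)%:R).
Proof. solve_eps. Qed.
Lemma sum_delta n (f : nat -> C) p : (p < n)%N ->
  \sum_(j < n) f j * (j == p :> nat)%:R = f p.
Proof.
move=> hp; rewrite (bigD1 (Ordinal hp)) //= eqxx mulr1 big1 ?addr0 //.
move=> j /eqP hj; case: eqP => h; last by rewrite mulr0.
by exfalso; apply: hj; apply: val_inj.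
Qed.

Lemma W_shift p q F H :
  W p q ('X * F) H - W p q F ('X * H) = - (F`_p * H`_q + F`_q * H`_p).
Proof.
have E1 : W p q ('X * F) H = \sum_(j < (p + q).+1) F`_j * H`_(p + q - j) * eps p q j.+1.
  rewrite /W big_ord_recl /= coefXM eqxx !mul0r add0r.
  by apply: eq_bigr => j _; rewrite coefXM /= subSS.
have E2 : W p q F ('X * H) = \sum_(j < (p + q).+1) F`_j * H`_(p + q - j) * eps p q j.
  rewrite /W big_ord_recr /= subnn coefXM eqxx mulr0 mul0r addr0.
  apply: eq_bigr => j _; rewrite coefXM /=.
  have -> : ((p + q).+1 - j == 0)%N = false by have := ltn_ord j; lia.
  by have -> : ((p + q).+1 - j).-1 = (p + q - j)%N by have := ltn_ord j; lia.
rewrite E1 E2 -sumrB.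
under eq_bigr => j _ do rewrite -mulrBr eps_step mulrN mulrDr.
rewrite sumrN big_split /= (sum_delta _ (fun j => F`_j * H`_(p + q - j))) ?(sum_delta _ (fun j => F`_j * H`_(p + q - j))); try lia.
by rewrite addKn addnK.
Qed.

Lemma W_lin1 p q F1 F2 c H : W p q (F1 - c%:P * F2) H = W p q F1 H - c * W p q F2 H.
Proof.
rewrite /W mulr_sumr -sumrB; apply: eq_bigr => k _.
by rewrite coefB coefCM; ring.
Qed.

Lemma half_eq (x y : C) : x + x = y + y -> x = y.
Proof.
move=> h; apply/eqP; rewrite -subr_eq0.
have : (x - y) *+ 2 == 0.
  have -> : (x - y) *+ 2 = (x + x) - (y + y) by rewrite mulr2n; ring.
  by rewrite h subrr.
by rewrite mulrn_eq0.
Qed.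

Lemma W_self p q G : W p q G G = 0.
Proof.
apply: half_eq; rewrite addr0 {1}W_anti; exact: addNr.
Qed.

Lemma W_fact p q c G : W p q (('X - c%:P) * G) G = - (G`_p * G`_q).
Proof.
rewrite mulrBl W_lin1 W_self mulr0 subr0.
have := W_shift p q G G; rewrite (W_anti _ _ G ('X * G)) opprK => h.
apply: half_eq; rewrite h; ring.
Qed.
End W.

Local Open Scope complex_scope.
Set Implicit Arguments. Unset Strict Implicit. Unset Printing Implicit Defensive.
Local Open Scope ring_scope.
Local Open Scope complex_scope.

Section Main.
Variables (R : realType) (r N : nat) (a : 'I_N -> R[i]) (sigma : 'M[R[i]]_r).
Local Notation C := (R[i]).

Definition Pp : {poly C} := \prod_(j < N) ('X - (a j)%:P).
Definition Qp (i : 'I_N) : {poly C} := \prod_(j < N | j != i) ('X - (a j)%:P).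

Lemma size_a_hat i : size (a_hat a i) = N.-1.
Proof.
rewrite /a_hat size_map size_filter.
have h := count_predC (fun j => j != i) (enum 'I_N).
have h1 : count (predC (fun j => j != i)) (enum 'I_N) = 1%N.
  rewrite (eq_count (a2 := pred1 i)); last by move=> j /=; rewrite negbK.
  by rewrite count_uniq_mem ?enum_uniq // mem_enum.
move: h; rewrite h1 size_enum_ord => /(congr1 predn) <-; by rewrite addn1.
Qed.

Lemma Q_hat i : Qp i = \prod_(p <- a_hat a i) ('X - p%:P).
Proof. by rewrite /Qp /a_hat big_map big_filter enumT. Qed.

Lemma P_all : Pp = \prod_(p <- a_all a) ('X - p%:P).
Proof. by rewrite /Pp /a_all big_map enumT. Qed.

Lemma Mcoef_Q l i : (l < N)%N -> Mcoef a l i = (Qp i)`_l.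
Proof.
move=> hl.
have hs := size_a_hat i.
rewrite Q_hat coef_prod_XsubC; last by rewrite hs; lia.
have e : (N - l - 1 = size (a_hat a i) - l)%N by rewrite hs; lia.
by rewrite /Mcoef /elsym e.
Qed.

Lemma P_coef l : (l <= N)%N -> (-1) ^+ (N - l) * elsym (a_all a) (N - l) = Pp`_l.
Proof.
move=> hl.
have hs : size (a_all a) = N by rewrite size_map size_enum_ord.
rewrite P_all coef_prod_XsubC; last by rewrite hs.
by rewrite /elsym hs.
Qed.

Lemma P_fact i : Pp = ('X - (a i)%:P) * Qp i.
Proof. by rewrite /Pp (bigD1 i). Qed.

Lemma size_Q i : size (Qp i) = N.
Proof.
rewrite Q_hat size_prod_XsubC size_a_hat.
by case: N i => [[]|n].
Qed.

Lemma size_P : size Pp = N.+1.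
Proof. by rewrite P_all size_prod_XsubC size_map size_enum_ord. Qed.

Lemma Q_coef_big i m : (N <= m)%N -> (Qp i)`_m = 0.
Proof. by move=> h; rewrite nth_default // size_Q. Qed.

Lemma P_coef_big m : (N < m)%N -> Pp`_m = 0.
Proof. by move=> h; rewrite nth_default // size_P. Qed.

Lemma P_coefN : Pp`_N = 1.
Proof.
have /monicP : Pp \is monic by rewrite /Pp monic_prod_XsubC.
by rewrite lead_coefE size_P.
Qed.

Definition Bnat (A : 'I_N -> 'M[C]_r) (m : nat) :=
  \sum_(i < N) (Qp i)`_m *: A i + Pp`_m *: sigma.

Lemma Bext_nat A m : Bext a sigma A (Posz m) = Bnat A m.
Proof.
rewrite /Bext /Bnat; case: ifP => hm.
  rewrite /Bcoord P_coef; last lia.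
  by congr (_ + _); apply: eq_bigr => i _; rewrite Mcoef_Q.
case: eqP => hN.
  rewrite big1 ?add0r; last by move=> i _; rewrite Q_coef_big ?scale0r //; lia.
  by rewrite hN P_coefN scale1r.
rewrite big1 ?add0r; last by move=> i _; rewrite Q_coef_big ?scale0r //; lia.
by rewrite P_coef_big ?scale0r //; lia.
Qed.

Lemma w_eq (l : nat) : (l <= N)%N ->
  (-1) ^ ((N%:Z - l%:Z - 1)%R) * elsym (a_all a) (N - l) = - Pp`_l.
Proof.
move=> hl; rewrite -P_coef // subzn // expfzDr ?oppr_eq0 ?oner_eq0 //.
by rewrite exprN1 invrN1 mulrN1 mulNr.
Qed.

Lemma lbrZl c (Y X : 'M[C]_r) : lbr (c *: Y) X = c *: lbr Y X.
Proof. by rewrite /lbr -scalemxAl -scalemxAr scalerBr. Qed.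

Lemma lbrZr c (X Y : 'M[C]_r) : lbr X (c *: Y) = c *: lbr X Y.
Proof. by rewrite /lbr -scalemxAl -scalemxAr scalerBr. Qed.

Lemma lbr_suml (I : Type) (s : seq I) (F : I -> 'M[C]_r) X :
  lbr (\sum_(i <- s) F i) X = \sum_(i <- s) lbr (F i) X.
Proof. by rewrite /lbr mulmx_suml mulmx_sumr -sumrB. Qed.

Lemma lbr_sumr (I : Type) (s : seq I) (F : I -> 'M[C]_r) X :
  lbr X (\sum_(i <- s) F i) = \sum_(i <- s) lbr X (F i).
Proof. by rewrite /lbr mulmx_suml mulmx_sumr -sumrB. Qed.

Lemma Pi_entry_eq A (l : nat) (p q : 'I_N) X :
  Pi_entry a sigma A l p q X =
  lbr (eps C p q l *: Bext a sigma A ((p + q).+1%:Z - l%:Z)) X.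
Proof.
rewrite /Pi_entry /eps lbrZl.
case: ifP => [/andP[h1 h2]|h1].
  have -> : (((l <= p) && (l <= q))%N) = false by lia.
  rewrite scaleN1r; congr (- lbr (Bext a sigma A _) X); lia.
case: ifP => [/andP[h3 h4]|h3].
  rewrite scale1r; congr (lbr (Bext a sigma A _) X); lia.
by rewrite scale0r.
Qed.

Lemma Bext_neg A (s k : nat) : (s < k)%N -> Bext a sigma A (s%:Z - k%:Z) = 0.
Proof.
move=> h; have -> : (s%:Z - k%:Z = Negz (k - s.+1))%R by rewrite NegzE; lia.
by [].
Qed.

Lemma key A (p q : 'I_N) :
  \sum_(l < N.+1) ((-1) ^ ((N%:Z - l%:Z - 1)%R) * elsym (a_all a) (N - l)) *:
      (eps C p q l *: Bext a sigma A ((p + q).+1%:Z - l%:Z))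
  = \sum_(i < N) ((Qp i)`_p * (Qp i)`_q) *: A i.
Proof.
transitivity (\sum_(k < N + (p + q).+2) (if ((k <= N) && (k <= (p + q).+1))%N
   then (- Pp`_k * eps C p q k) *: Bnat A ((p + q).+1 - k) else 0)).
  rewrite (big_ord_widen (N + (p + q).+2) (fun l : nat => ((-1) ^ ((N%:Z - l%:Z - 1)%R) * elsym (a_all a) (N - l)) *:
      (eps C p q l *: Bext a sigma A ((p + q).+1%:Z - l%:Z)))); last lia.
  rewrite big_mkcond; apply: eq_bigr => k _.
  case: ifP => hk1; case: ifP => hk2 //; try lia.
    by rewrite w_eq ?subzn ?Bext_nat ?scalerA //; lia.
  by rewrite Bext_neg ?scaler0 //; lia.
transitivity (\sum_(k < (p + q).+2) (- Pp`_k * eps C p q k) *: Bnat A ((p + q).+1 - k)).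
  rewrite [RHS](big_ord_widen (N + (p + q).+2) (fun k : nat => (- Pp`_k * eps C p q k) *: Bnat A ((p + q).+1 - k))); last lia.
  rewrite [RHS]big_mkcond; apply: eq_bigr => k _.
  case: ifP => hk1; case: ifP => hk2 //; try lia.
  by rewrite P_coef_big ?oppr0 ?mul0r ?scale0r //; lia.
rewrite /Bnat.
under eq_bigr do rewrite scalerDr scaler_sumr.
rewrite big_split /= exchange_big /=.
have -> : \sum_(k < (p + q).+2) (- Pp`_k * eps C p q k) *: (Pp`_((p + q).+1 - k) *: sigma)
   = (- W p q Pp Pp) *: sigma.
  rewrite /W -sumrN scaler_suml; apply: eq_bigr => k _; rewrite scalerA; congr (_ *: _); ring.
rewrite W_self oppr0 scale0r addr0.
apply: eq_bigr => i _.
rewrite -[(Qp i)`_p * _]opprK -(W_fact p q (a i)) -(P_fact i).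
rewrite /W -sumrN scaler_suml; apply: eq_bigr => k _; rewrite scalerA; congr (_ *: _); ring.
Qed.

Lemma T_lin (I : Type) (s : seq I) (c : I -> C) (M : I -> 'M[C]_r) (X Y : 'M[C]_r) :
  \tr (X *m lbr (\sum_(l <- s) c l *: M l) Y) = \sum_(l <- s) c l * \tr (X *m lbr (M l) Y).
Proof.
rewrite lbr_suml mulmx_sumr linear_sum; apply: eq_bigr => l _.
by rewrite /= lbrZl -scalemxAr mxtraceZ.
Qed.
End Main.

Theorem lemma1 (R : realType) (r N : nat) (g : {vspace 'M[R[i]]_r})
    (a : 'I_N -> R[i]) (sigma : 'M[R[i]]_r) :
  semisimple g -> (0 < N)%N -> injective a -> sigma \in g ->
  forall (A xi eta : 'I_N -> 'M[R[i]]_r),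
    (forall i, A i \in g) -> (forall l, xi l \in g) -> (forall l, eta l \in g) ->
    P_bracket a A xi eta =
    \sum_(l < N.+1)
       (-1) ^ ((N%:Z - l%:Z - 1)%R) * elsym (a_all a) (N - l)
       * Pi_bracket a sigma A l xi eta.
Proof.
move=> _ _ _ _ A xi eta _ _ _.
have hL : P_bracket a A xi eta = \sum_(p < N) \sum_(q < N)
   \tr (xi p *m lbr (\sum_(i < N) ((Qp a i)`_p * (Qp a i)`_q) *: A i) (eta q)).
  under [RHS]eq_bigr => p _ do under eq_bigr => q _ do rewrite T_lin.
  rewrite /P_bracket /dA.
  transitivity (\sum_(i < N) \sum_(p < N) \sum_(q < N)
     ((Qp a i)`_p * (Qp a i)`_q) * \tr (xi p *m lbr (A i) (eta q))).
    apply: eq_bigr => i _; rewrite mulmx_suml linear_sum; apply: eq_bigr => p _.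
    rewrite /= -scalemxAl mxtraceZ lbr_sumr mulmx_sumr linear_sum /= mulr_sumr.
    apply: eq_bigr => q _; rewrite lbrZr -scalemxAr mxtraceZ !Mcoef_Q //; exact: mulrA.
  rewrite [LHS]exchange_big /=; apply: eq_bigr => p _; exact: exchange_big.
rewrite hL; symmetry.
transitivity (\sum_(l < N.+1) \sum_(p < N) \sum_(q < N)
   ((-1) ^ ((N%:Z - l%:Z - 1)%R) * elsym (a_all a) (N - l)) *
   \tr (xi p *m lbr (eps R[i] p q l *: Bext a sigma A ((p + q).+1%:Z - l%:Z)) (eta q))).
  apply: eq_bigr => l _; rewrite /Pi_bracket mulr_sumr; apply: eq_bigr => p _.
  rewrite mulmx_sumr linear_sum /= mulr_sumr; apply: eq_bigr => q _.
  by rewrite Pi_entry_eq.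
rewrite [LHS]exchange_big /=; apply: eq_bigr => p _; rewrite [LHS]exchange_big /=; apply: eq_bigr => q _.
by rewrite -(key a sigma A p q) [RHS]T_lin.
Qed.
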